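(* Let $(X,S)$ be the periodic Tri-tris transformation semigroup on the $3\times 4$ board (width $3$, height $4$) with piece set $P=\{\mathrm{RS},\mathrm{LUS},\mathrm{RUS},\mathrm{V}\}$. There is a $5$-element set $Z\subseteq X$ of game states, containing the empty board $e$, and there are elements $g_1,g_2\in S$ such that $Z\cdot g_1=Z$ and $Z\cdot g_2=Z$. The restriction of $g_1$ to $Z$ is a $5$-cycle. The restriction of $g_2$ to $Z$ is a product of a disjoint $3$-cycle (containing $e$) and a transposition. Consequently, the permutations of $Z$ induced by elements of $S$ that map $Z$ onto itself form the full symmetric group $S_5$ on $Z$. In particular, this group contains the alternating group $A_5$, a finite simple nonabelian group.
   Context: Board: a grid of $n=3$ columns, indexed $0,1,2$, and $k=4$ rows. A game state is a subset of filled cells of this grid. Pieces are sets of connected cells. - $\mathrm{V}$ is the vertical straight triomino: three cells stacked in one column. - The other pieces are orientations of the L-shaped triomino, i.e. a $2\times 2$ square with one cell removed. - $\mathrm{RS}$ has two cells in its bottom row and one cell above the right one. - $\mathrm{LUS}$ has two cells in its top row and one cell below the left one. - $\mathrm{RUS}$ has two cells in its top row and one cell below the right one. - (The fourth orientation, $\mathrm{LS}$, has one cell above the left bottom cell; it is not used here.) Basic events: a basic event is a pair $\sigma=(p,\xi)$ with $p\in P$ and $\xi$ a column index such that the piece fits horizontally when its leftmost cells are placed in column $\xi$. The state $x\cdot\sigma$ is obtained as follows. 1. Drop $p$ vertically, without rotation or sliding, with its leftmost cells in column $\xi$, from above the board until it rests on the floor or on filled cells. 2. Repeatedly remove any completely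 filled row, moving all cells above it down one row. 3. If the piece cannot be placed entirely within the $k$ rows, the result is the game-over outcome. In the periodic variant, the game-over outcome is replaced by the empty board $e$, so $x\cdot\sigma=e$. $X$ is the set of states reachable from $e$ by finite sequences of basic events. $S$ is the transformation semigroup on $X$ generated by the basic events, with product $\sigma_1\sigma_2$ meaning apply $\sigma_1$ first and then $\sigma_2$. *)

(* Defs.v *)
From mathcomp Require Import all_boot.
Set Implicit Arguments. Unset Strict Implicit. Unset Printing Implicit Defensive.

Inductive piece := RS | LUS | RUS | V.

(* Cells of a piece as offsets (dx, dy) from its lower-left corner;
   dx = column offset (to the right), dy = row offset (upwards). *)
Definition offsets (p : piece) : seq (nat * nat) :=
  match p with
  | RS  => [:: (0, 0); (1, 0); (1, 1)]
  | LUS => [:: (0, 1); (1, 1); (0, 0)]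
  | RUS => [:: (0, 1); (1, 1); (1, 0)]
  | V   => [:: (0, 0); (0, 1); (0, 2)]
  end.

Definition pwidth (p : piece) : nat := match p with V => 1 | _ => 2 end.
Definition pheight (p : piece) : nat := match p with V => 3 | _ => 2 end.

(* Board: n = 3 columns, k = 4 rows; row 0 is the floor row. *)
Definition ncols := 3.
Definition nrows := 4.
Definition cell := ('I_ncols * 'I_nrows)%type.
Definition state := {set cell}.
Definition empty_board : state := set0.

(* A basic event (p, xi): leftmost cells of p in column xi. *)
Definition event := (piece * nat)%type.
Definition valid_event (ev : event) : bool := ev.2 + pwidth ev.1 <= ncols.

Definition filled (x : state) (c r : nat) : bool :=
  [exists q : cell, [&& q \in x, q.1 == c :> nat & q.2 == r :> nat]].

Definition colheight (x : state) (c : nat) : nat :=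
  \max_(r < nrows | filled x c r) r.+1.

(* row of the lowest line of the piece once it has been dropped from above *)
Definition landing (x : state) (p : piece) (xi : nat) : nat :=
  \max_(o <- offsets p) (colheight x (xi + o.1) - o.2).

Definition placed (x : state) (p : piece) (xi : nat) (c r : nat) : bool :=
  filled x c r ||
  has (fun o => (xi + o.1 == c) && (landing x p xi + o.2 == r)) (offsets p).

Definition fullrow (f : nat -> nat -> bool) (r : nat) : bool :=
  all (fun c => f c r) (iota 0 ncols).

(* remove all completely filled rows, moving the cells above them down *)
Definition clear_rows (f : nat -> nat -> bool) : state :=
  let keep := [seq r <- iota 0 nrows | ~~ fullrow f r] in
  [set q : cell | f q.1 (nth nrows keep q.2)].

(* periodic variant: game over is replaced by the empty board *)
Definition step (x : state) (ev : event) : state :=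
  let: (p, xi) := ev in
  if nrows < landing x p xi + pheight p then empty_board
  else clear_rows (placed x p xi).

(* action of the product sigma_1 ... sigma_m (sigma_1 applied first) *)
Definition act_word (x : state) (w : seq event) : state := foldl step x w.

(* elements of S are the products of nonempty sequences of basic events *)
Definition word_in_S (w : seq event) : bool := (0 < size w) && all valid_event w.

(* X: states reachable from the empty board *)
Definition reachable (x : state) : Prop :=
  exists w : seq event, all valid_event w /\ x = act_word empty_board w.

(* Main.v *)
Require Import Defs.
From mathcomp Require Import all_boot.
Set Implicit Arguments. Unset Strict Implicit. Unset Printing Implicit Defensive.

Definition w1 : seq event := [:: (V, 0); (V, 2); (LUS, 1)].
Definition w2 : seq event := [:: (V, 0); (LUS, 0); (V, 2); (LUS, 1)].
Definition z0 : state := empty_board.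
Definition z1 : state := act_word z0 w1.
Definition z2 : state := act_word z1 w1.
Definition z3 : state := act_word z2 w1.
Definition z4 : state := act_word z3 w1.
Definition zs : seq state := [:: z0; z1; z2; z3; z4].
From mathcomp Require Import zify.

Definition colh (f : nat -> nat -> bool) (c : nat) : nat :=
  foldr maxn 0 [seq r.+1 | r <- iota 0 4 & f c r].
Definition land f p xi : nat :=
  foldr maxn 0 [seq colh f (xi + o.1) - o.2 | o <- offsets p].
Definition placed_c f p xi (c r : nat) : bool :=
  f c r || has (fun o => (xi + o.1 == c) && (land f p xi + o.2 == r)) (offsets p).
Definition clear_c (g : nat -> nat -> bool) (c r : nat) : bool :=
  [&& c < 3, r < 4 & g c (nth 4 [seq r <- iota 0 4 | ~~ fullrow g r] r)].
Definition step_c (f : nat -> nat -> bool) (ev : event) : nat -> nat -> bool :=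
  let: (p, xi) := ev in
  if 4 < land f p xi + pheight p then (fun _ _ => false)
  else clear_c (placed_c f p xi).
Definition dec (s : seq bool) (c r : nat) : bool :=
  [&& c < 3, r < 4 & nth false s (r * 3 + c)].
Definition enc (f : nat -> nat -> bool) : seq bool :=
  [seq f (i %% 3) (i %/ 3) | i <- iota 0 12].
Definition step_s (s : seq bool) (ev : event) : seq bool := enc (step_c (dec s) ev).
Definition code (x : state) : seq bool := enc (filled x).

Lemma colh_ok x f c : filled x =2 f -> colheight x c = colh f c.
Proof.
move=> hf; rewrite /colheight /colh /nrows big_mkcond !big_ord_recr big_ord0 /= !hf.
by case: (f c 0); case: (f c 1); case: (f c 2); case: (f c 3).
Qed.

Lemma land_ok x f p xi : filled x =2 f -> landing x p xi = land f p xi.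
Proof.
move=> hf; rewrite /landing /land.
by case: p; rewrite !big_cons big_nil /= !(colh_ok _ hf).
Qed.

Lemma filled_clear g c r : filled (clear_rows g) c r = clear_c g c r.
Proof.
rewrite /filled /clear_c; apply/existsP/idP.
  case=> q /and3P[]; rewrite inE => hq /eqP <- /eqP <-.
  by rewrite !ltn_ord.
case/and3P=> hc hr hg; exists (Ordinal hc, Ordinal hr).
by rewrite inE /= hg !eqxx.
Qed.

Lemma filled_bound x c r : filled x c r -> (c < 3) && (r < 4).
Proof. by case/existsP=> q /and3P[_ /eqP <- /eqP <-]; rewrite !ltn_ord. Qed.

Lemma filled_mem x (q : cell) : filled x q.1 q.2 = (q \in x).
Proof.
apply/existsP/idP; last by move=> h; exists q; rewrite h !eqxx.
case=> q' /and3P[h]; case: q q' h => [a b] [a' b'] /= h.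
by move=> /eqP/val_inj <- /eqP/val_inj <-.
Qed.

Lemma filled_set0 : filled empty_board =2 (fun _ _ => false).
Proof. by move=> c r; apply/existsP => -[q]; rewrite inE. Qed.

Lemma dec_enc g c r : dec (enc g) c r = [&& c < 3, r < 4 & g c r].
Proof.
rewrite /dec; case: (ltnP c 3) => hc //; case: (ltnP r 4) => hr //.
rewrite /enc !andTb (nth_map 0); last by rewrite size_iota; lia.
rewrite nth_iota; last by lia.
have -> : (0 + (r * 3 + c)) %% 3 = c by lia.
have -> : (0 + (r * 3 + c)) %/ 3 = r by lia.
by [].
Qed.

Lemma enc_ext f g : f =2 g -> enc f = enc g.
Proof. by move=> h; apply: eq_map => i; rewrite h. Qed.

Lemma filled_step x f ev : filled x =2 f -> filled (step x ev) =2 step_c f ev.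
Proof.
move=> hf c r; case: ev => p xi; rewrite /step /step_c (land_ok p xi hf).
case: ifP => _; first by rewrite filled_set0.
rewrite filled_clear /clear_c.
have hp : placed x p xi =2 placed_c f p xi.
  by move=> c' r'; rewrite /placed /placed_c hf (land_ok p xi hf).
have -> : [seq r0 <- iota 0 4 | ~~ fullrow (placed x p xi) r0] =
          [seq r0 <- iota 0 4 | ~~ fullrow (placed_c f p xi) r0].
  apply: eq_filter => k; rewrite /fullrow; congr (~~ _).
  by apply: eq_all => c'; rewrite hp.
by rewrite hp.
Qed.

Lemma code_step x ev : code (step x ev) = step_s (code x) ev.
Proof.
rewrite /code /step_s; apply: enc_ext; apply: filled_step => c r.
rewrite dec_enc; case h: (filled x c r); last by rewrite !andbF.
by rewrite andbT (filled_bound h).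
Qed.

Lemma code_act x w : code (act_word x w) = foldl step_s (code x) w.
Proof. by elim: w x => [|e w IH] x //=; rewrite IH code_step. Qed.

Lemma code_inj x y : code x = code y -> x = y.
Proof.
move=> h; apply/setP => q; rewrite -!filled_mem.
have := congr1 (fun s => dec s q.1 q.2) h; rewrite /= /code !dec_enc !ltn_ord.
by [].
Qed.

Definition c0 : seq bool := nseq 12 false.
Lemma code0 : code empty_board = c0.
Proof. by rewrite /code (enc_ext filled_set0). Qed.
Definition gtable : seq (seq bool) := [::
  [:: true];
  [:: false];
  [:: true; true];
  [:: true; false];
  [:: false; true];
  [:: false; false];
  [:: true; true; true];
  [:: true; true; false];
  [:: true; false; true];
  [:: true; false; false];
  [:: false; true; true];
  [:: false; true; false];
  [:: false; false; true];
  [:: false; false; false];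
  [:: true; true; true; true];
  [:: true; true; true; false];
  [:: true; true; false; true];
  [:: true; true; false; false];
  [:: true; false; true; true];
  [:: true; false; true; false];
  [:: true; false; false; true];
  [:: true; false; false; false];
  [:: false; true; true; true];
  [:: false; true; true; false];
  [:: false; true; false; true];
  [:: false; true; false; false];
  [:: false; false; true; true];
  [:: false; false; true; false];
  [:: false; false; false; true];
  [:: true; true; true; true; true];
  [:: true; true; true; true; false];
  [:: true; true; true; false; true];
  [:: true; true; true; false; false];
  [:: true; true; false; true; true];
  [:: true; true; false; true; false];
  [:: true; true; false; false; true];
  [:: true; true; false; false; false];
  [:: true; false; true; true; true];
  [:: true; false; true; true; false];
  [:: true; false; true; false; true];
  [:: true; false; true; false; false];
  [:: true; false; false; true; true];
  [:: true; false; false; true; false];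
  [:: true; false; false; false; true];
  [:: false; true; true; true; true];
  [:: false; true; true; false; true];
  [:: false; true; true; false; false];
  [:: false; true; false; true; false];
  [:: false; true; false; false; false];
  [:: false; false; true; true; false];
  [:: false; false; true; false; true];
  [:: false; false; false; true; true];
  [:: false; false; false; true; false];
  [:: true; true; true; true; false; true];
  [:: true; true; true; true; false; false];
  [:: true; true; true; false; true; false];
  [:: true; true; true; false; false; true];
  [:: true; true; true; false; false; false];
  [:: true; true; false; true; true; false];
  [:: true; true; false; true; false; true];
  [:: true; true; false; false; true; true];
  [:: true; true; false; false; true; false];
  [:: true; true; false; false; false; true];
  [:: true; false; true; true; true; true];
  [:: true; false; true; true; false; true];
  [:: true; false; true; true; false; false];
  [:: true; false; true; false; true; false];
  [:: true; false; true; false; false; false];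
  [:: true; false; false; true; true; false];
  [:: true; false; false; true; false; true];
  [:: true; false; false; false; true; true];
  [:: true; false; false; false; true; false];
  [:: false; true; true; true; true; false];
  [:: false; true; true; false; true; true];
  [:: false; true; true; false; true; false];
  [:: false; true; true; false; false; true];
  [:: false; true; true; false; false; false];
  [:: false; true; false; true; false; true];
  [:: false; true; false; true; false; false];
  [:: false; true; false; false; false; true];
  [:: false; false; true; true; false; true];
  [:: false; false; true; false; true; false];
  [:: false; false; false; true; true; false];
  [:: false; false; false; true; false; true];
  [:: true; true; true; true; false; true; false];
  [:: true; true; true; true; false; false; true];
  [:: true; true; true; true; false; false; false];
  [:: true; true; true; false; true; false; true];
  [:: true; true; true; false; false; true; true];
  [:: true; true; true; false; false; false; true];
  [:: true; true; false; true; true; false; false];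
  [:: true; true; false; true; false; true; false];
  [:: true; true; false; false; true; false; true];
  [:: true; true; false; false; false; true; false];
  [:: true; false; true; true; false; true; false];
  [:: true; false; true; true; false; false; true];
  [:: true; false; true; true; false; false; false];
  [:: true; false; true; false; true; false; true];
  [:: true; false; false; true; true; false; true];
  [:: true; false; false; true; false; true; false];
  [:: false; true; true; true; true; false; false];
  [:: false; true; true; false; true; false; true];
  [:: false; true; true; false; false; true; false];
  [:: false; true; false; true; false; false; false];
  [:: false; true; false; false; false; true; true];
  [:: false; false; true; true; false; true; true];
  [:: false; false; true; false; true; false; false];
  [:: false; false; false; true; false; true; false];
  [:: true; true; true; true; false; true; false; true];
  [:: true; true; true; true; false; false; true; true];
  [:: true; true; true; true; false; false; false; true];
  [:: true; true; true; false; false; false; true; false];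
  [:: true; true; false; false; true; false; true; false];
  [:: true; false; true; true; false; true; false; true];
  [:: false; true; true; true; true; false; false; false];
  [:: false; true; true; false; true; false; true; false];
  [:: false; true; true; false; false; true; false; true];
  [:: false; false; true; false; true; false; false; false];
  [:: false; false; false; true; false; true; false; false];
  [:: true; false; true; true; false; true; false; true; false]].
Definition fw1 (s : seq bool) := foldl step_s s w1.
Definition cz : seq (seq bool) := [:: c0; fw1 c0; fw1 (fw1 c0); fw1 (fw1 (fw1 c0)); fw1 (fw1 (fw1 (fw1 c0)))].
Lemma k1 : code z1 = fw1 c0.
Proof. rewrite /z1. rewrite code_act. rewrite /z0. rewrite code0. reflexivity. Qed.
Lemma k2 : code z2 = fw1 (fw1 c0).
Proof. rewrite /z2. rewrite code_act. rewrite k1. reflexivity. Qed.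
Lemma k3 : code z3 = fw1 (fw1 (fw1 c0)).
Proof. rewrite /z3. rewrite code_act. rewrite k2. reflexivity. Qed.
Lemma k4 : code z4 = fw1 (fw1 (fw1 (fw1 c0))).
Proof. rewrite /z4 code_act k3. reflexivity. Qed.
Lemma k0 : code z0 = c0. Proof. exact: code0. Qed.
Lemma cz_ok : map code zs = cz.
Proof.
have e : [:: code z0; code z1; code z2; code z3; code z4] = cz.
  exact: (congr2 cons k0 (congr2 cons k1 (congr2 cons k2 (congr2 cons k3 (congr2 cons k4 (erefl [::])))))).
exact: e. Qed.
Lemma chk_uniq : uniq cz.
Proof. vm_compute. reflexivity. Qed.

Lemma code_nth i : i < 5 -> code (nth z0 zs i) = nth c0 cz i.
Proof. by move=> hi; rewrite -cz_ok (nth_map z0). Qed.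

Lemma act_chk i j w : i < 5 -> j < 5 ->
  foldl step_s (nth c0 cz i) w == nth c0 cz j ->
  act_word (nth z0 zs i) w = nth z0 zs j.
Proof.
move=> hi hj /eqP h; apply: code_inj; by rewrite code_act !code_nth.
Qed.

Definition p1 : seq nat := [:: 1; 2; 3; 4; 0].
Definition p2 : seq nat := [:: 2; 4; 3; 0; 1].
Definition wd (g : seq bool) : seq event := flatten [seq if b then w1 else w2 | b <- g].
Definition pa (g : seq bool) (i : nat) : nat :=
  foldl (fun i b => nth 0 (if b then p1 else p2) i) i g.

Lemma gen_ok (b : bool) i : i < 5 ->
  act_word (nth z0 zs i) (if b then w1 else w2) = nth z0 zs (nth 0 (if b then p1 else p2) i)
  /\ nth 0 (if b then p1 else p2) i < 5.
Proof.
case: b; (case: i => [|[|[|[|[|i]]]]] hi; last by move: hi; rewrite !ltnS ltn0).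
all: (split; [apply: act_chk; [reflexivity | reflexivity | vm_compute; reflexivity]
             | reflexivity]).
Qed.

Lemma wd_ok g i : i < 5 ->
  act_word (nth z0 zs i) (wd g) = nth z0 zs (pa g i) /\ pa g i < 5.
Proof.
elim: g i => [|b g IH] i hi; first by split; [reflexivity | exact: hi].
have [h1 h2] := gen_ok b hi.
rewrite /wd /= -/(wd g) /act_word foldl_cat -/(act_word _ _) -/(act_word _ _) h1.
exact: IH.
Qed.

Lemma gt_ok : all (fun g => (0 < size (wd g)) && all valid_event (wd g)) gtable.
Proof. vm_compute. reflexivity. Qed.
Lemma cover : all (fun s => s \in [seq [seq pa g i | i <- iota 0 5] | g <- gtable])
  (permutations (iota 0 5)).
Proof. vm_compute. reflexivity. Qed.

Lemma e0 : act_word z4 w1 = z0.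
Proof. change (act_word (nth z0 zs 4) w1 = nth z0 zs 0). apply: act_chk; [reflexivity | reflexivity | vm_compute; reflexivity]. Qed.
Lemma e1 : act_word z0 w2 = z2.
Proof. change (act_word (nth z0 zs 0) w2 = nth z0 zs 2). apply: act_chk; [reflexivity | reflexivity | vm_compute; reflexivity]. Qed.
Lemma e2 : act_word z2 w2 = z3.
Proof. change (act_word (nth z0 zs 2) w2 = nth z0 zs 3). apply: act_chk; [reflexivity | reflexivity | vm_compute; reflexivity]. Qed.
Lemma e3 : act_word z3 w2 = z0.
Proof. change (act_word (nth z0 zs 3) w2 = nth z0 zs 0). apply: act_chk; [reflexivity | reflexivity | vm_compute; reflexivity]. Qed.
Lemma e4 : act_word z1 w2 = z4.
Proof. change (act_word (nth z0 zs 1) w2 = nth z0 zs 4). apply: act_chk; [reflexivity | reflexivity | vm_compute; reflexivity]. Qed.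
Lemma e5 : act_word z4 w2 = z1.
Proof. change (act_word (nth z0 zs 4) w2 = nth z0 zs 1). apply: act_chk; [reflexivity | reflexivity | vm_compute; reflexivity]. Qed.

Lemma imset_c1 (f : state -> state) a b c d e :
  f a = b -> f b = c -> f c = d -> f d = e -> f e = a ->
  [set f x | x in [set a; b; c; d; e]] = [set a; b; c; d; e].
Proof.
move=> ha hb hc hd he; rewrite !(imsetU1, imsetU, imset_set1) ha hb hc hd he.
apply/setP => z; rewrite !inE.
by case: (z == a); case: (z == b); case: (z == c); case: (z == d); case: (z == e).
Qed.
Lemma imset_c2 (f : state -> state) a b c d e :
  f a = c -> f c = d -> f d = a -> f b = e -> f e = b ->
  [set f x | x in [set a; b; c; d; e]] = [set a; b; c; d; e].
Proof.
move=> ha hc hd hb he; rewrite !(imsetU1, imsetU, imset_set1) ha hb hc hd he.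
apply/setP => z; rewrite !inE.
by case: (z == a); case: (z == b); case: (z == c); case: (z == d); case: (z == e).
Qed.
Lemma reord (a b c d e : state) : [set a; b; c; d; e] = [set a; c; d; b; e].
Proof.
apply/setP => z; rewrite !inE.
by case: (z == a); case: (z == b); case: (z == c); case: (z == d); case: (z == e).
Qed.

Definition Zs : {set state} := [set z0; z1; z2; z3; z4].
Lemma memZ_gen (a b c d e z : state) : (z \in [set a; b; c; d; e]) = (z \in [:: a; b; c; d; e]).
Proof. by rewrite !inE !orbA. Qed.
Lemma memZ z : (z \in Zs) = (z \in zs).
Proof. exact: memZ_gen. Qed.

Theorem mainTheorem1 :
  exists Z : {set state},
    [/\ #|Z| = 5, empty_board \in Z & forall z, z \in Z -> reachable z] /\
    exists w1 w2 : seq event,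
      [/\ word_in_S w1, word_in_S w2,
          [set act_word z w1 | z in Z] = Z &
          [set act_word z w2 | z in Z] = Z] /\
      (* g1 restricted to Z is a 5-cycle *)
      (exists z0 z1 z2 z3 z4 : state,
         [/\ Z = [set z0; z1; z2; z3; z4],
             act_word z0 w1 = z1, act_word z1 w1 = z2,
             act_word z2 w1 = z3 & act_word z3 w1 = z4 /\ act_word z4 w1 = z0]) /\
      (* g2 restricted to Z is a 3-cycle through e and a disjoint transposition *)
      (exists a b c d : state,
         [/\ Z = [set empty_board; a; b; c; d],
             act_word empty_board w2 = a, act_word a w2 = b,
             act_word b w2 = empty_board & act_word c w2 = d /\ act_word d w2 = c]) /\
      (* consequently every permutation of Z is induced by an element of S *)
      (forall f : state -> state,
         {in Z, forall z, f z \in Z} -> {in Z &, injective f} ->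
         exists w : seq event, word_in_S w /\ {in Z, forall z, act_word z w = f z}).
Proof.
have uzs : uniq zs by apply: (@map_uniq _ _ code); rewrite cz_ok chk_uniq.
exists Zs; split.
  split.
  - have -> : Zs = [set z in zs] by apply/setP => z; rewrite memZ in_set.
    by rewrite cardsE; apply/card_uniqP.
  - by rewrite memZ mem_head.
  - move=> z; rewrite memZ /zs !inE => /orP[/eqP->|/orP[/eqP->|/orP[/eqP->|/orP[/eqP->|/eqP->]]]].
    + by exists [::].
    + exists w1; split; [reflexivity | reflexivity].
    + exists (w1 ++ w1); split; first reflexivity.
      by rewrite /act_word foldl_cat.
    + exists (w1 ++ w1 ++ w1); split; first reflexivity.
      by rewrite /act_word !foldl_cat.
    + exists (w1 ++ w1 ++ w1 ++ w1); split; first reflexivity.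
      by rewrite /act_word !foldl_cat.
exists w1, w2; split.
  split; [reflexivity | reflexivity | | ].
  - apply: imset_c1; [reflexivity | reflexivity | reflexivity | reflexivity | exact: e0].
  - apply: imset_c2; [exact: e1 | exact: e2 | exact: e3 | exact: e4 | exact: e5].
split.
  exists z0, z1, z2, z3, z4; split; [reflexivity | reflexivity | reflexivity | reflexivity |].
  split; [reflexivity | exact: e0].
split.
  exists z2, z3, z1, z4; split; [exact: reord | exact: e1 | exact: e2 | exact: e3 |].
  split; [exact: e4 | exact: e5].
move=> f hZ hinj.
set s := [seq index (f z) zs | z <- zs].
have fin : forall z, z \in zs -> f z \in zs by move=> z; rewrite -!memZ; exact: hZ.
have us : uniq s.
  rewrite map_inj_in_uniq; first exact: uzs.
  move=> x y hx hy he; apply: hinj; rewrite ?memZ; [exact: hx | exact: hy |].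
  by rewrite -(nth_index z0 (fin _ hx)) he (nth_index z0 (fin _ hy)).
have sub : {subset s <= iota 0 5}.
  move=> k /mapP [z hz ->]; rewrite mem_iota add0n.
  by rewrite (index_mem (f z) zs) fin.
have [_ eqs] := uniq_min_size us sub (leqnn _).
have : s \in permutations (iota 0 5).
  rewrite mem_permutations; apply: uniq_perm; [exact: us | exact: iota_uniq | exact: eqs].
move/(allP cover)/mapP => [g hg hsg].
have /andP [gs gv] := allP gt_ok g hg.
exists (wd g); split; first by rewrite /word_in_S gs gv.
move=> z; rewrite memZ => hz.
have hi : index z zs < 5 by rewrite (index_mem z zs) hz.
have hn : nth 0 s (index z zs) = pa g (index z zs).
  by rewrite hsg (nth_map 0) ?size_iota // nth_iota.
rewrite -{1}(nth_index z0 hz); have [-> _] := wd_ok g hi.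
rewrite -hn /s (@nth_map _ z0 _ 0 (fun z => index (f z) zs) (index z zs) zs hi).
by rewrite (nth_index z0 hz) (nth_index z0 (fin z hz)).
Qed.
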